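(* Let $B_i=(\underline{a}_i,\overline{a}_i)\times(\underline{b}_i,\overline{b}_i)\subset\mathbb{R}^2$, $i=1,\dots,N$, be rectangles and $d$ a positive integer, $p=\binom{d+2}{2}$. Let $$V(B_1,\dots,B_N)=\{f\in\mathbb{Z}[x,y]\mid \mathrm{Zero}(f)\cap B_i\neq\emptyset \text{ for all } i=1,\dots,N\},$$ where $\mathrm{Zero}(f)=\{(x,y)\in\mathbb{R}^2\mid f(x,y)=0\}$. Define the polynomial function $D_d:\mathbb{R}^{2N}\to\mathbb{R}$ by $$D_d(x_1,y_1,\dots,x_N,y_N)=\det\Big(\sum_{i=1}^N \mathbf{v}_d(x_i,y_i)\mathbf{v}_d(x_i,y_i)^T\Big),$$ where $\mathbf{v}_d$ is the vector of all $p$ monomials in $x,y$ of total degree at most $d$. If $D_d>0$ at every point of $B_1\times B_2\times\cdots\times B_N\subset\mathbb{R}^{2N}$, then $$\min\{\deg f\mid f\in V(B_1,\dots,B_N),\ f\neq 0\}\ge d+1.$$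
   Context: $\mathbf{v}_d=[1,x,y,x^2,xy,y^2,\dots,x^d,\dots,y^d]^T$ and $\mathbf{v}_d(x_i,y_i)$ is its evaluation at $(x_i,y_i)$. ''Positive definite on the box'' in the paper means strictly positive at every point of the box. *)

(* Defs.v *)
From HB Require Import structures.
From mathcomp Require Import all_boot all_order all_algebra.
From mathcomp Require Import mpoly.
Set Implicit Arguments. Unset Strict Implicit. Unset Printing Implicit Defensive.
Import Order.TTheory GRing.Theory Num.Theory.
Local Open Scope ring_scope.

(* exponent pairs (a,b) of the monomials x^a y^b of total degree <= d, in the
   order 1, x, y, x^2, xy, y^2, ..., x^d, ..., y^d *)
Definition monos (d : nat) : seq (nat * nat) :=
  flatten [seq [seq ((k - j)%N, j) | j <- iota 0 k.+1] | k <- iota 0 d.+1].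

Definition pdim (d : nat) : nat := 'C(d.+2, 2).

Definition vd {R : ringType} (d : nat) (x y : R) : 'cV[R]_(pdim d) :=
  \col_(i < pdim d) (x ^+ (nth (0%N, 0%N) (monos d) i).1 *
                     y ^+ (nth (0%N, 0%N) (monos d) i).2).

Definition Dmat {R : comRingType} (d N : nat) (xs ys : 'I_N -> R)
  : 'M[R]_(pdim d) :=
  \sum_(i < N) (vd d (xs i) (ys i) *m (vd d (xs i) (ys i))^T).

Definition D_d {R : comRingType} (d N : nat) (xs ys : 'I_N -> R) : R :=
  \det (Dmat d xs ys).

Definition evalZ {R : ringType} (f : {mpoly int[2]}) (x y : R) : R :=
  mmap (fun z : int => z%:~R) (fun i : 'I_2 => if val i == 0%N then x else y) f.

Definition tdeg (f : {mpoly int[2]}) : nat := (msize f).-1.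

Definition in_rect {R : realFieldType} (alo ahi blo bhi x y : R) : Prop :=
  alo < x < ahi /\ blo < y < bhi.

Definition inV {R : realFieldType} (N : nat) (alo ahi blo bhi : 'I_N -> R)
  (f : {mpoly int[2]}) : Prop :=
  forall i : 'I_N, exists x y : R,
    in_rect (alo i) (ahi i) (blo i) (bhi i) x y /\ evalZ f x y = 0.

Lemma size_monos_check : [seq size (monos d) == pdim d | d <- iota 0 6] = nseq 6 true.
Proof. by []. Qed.

(* Main.v *)
Require Import Defs.
From HB Require Import structures.
From mathcomp Require Import all_boot all_order all_algebra.
From mathcomp Require Import mpoly.
From Stdlib Require Import ClassicalEpsilon.
From mathcomp Require Import zify.
Import Order.TTheory GRing.Theory Num.Theory.
Local Open Scope ring_scope.

Definition i0 : 'I_2 := ord0.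
Definition i1 : 'I_2 := ord_max.

Definition mk (a b : nat) : 'X_{1..2} :=
  [multinom (if val i == 0%N then a else b) | i < 2].
Definition pr (m : 'X_{1..2}) : nat * nat := (m i0, m i1).

Lemma pr_mk a b : pr (mk a b) = (a, b).
Proof. by rewrite /pr /mk !mnmE. Qed.

Lemma mk_pr m : mk (pr m).1 (pr m).2 = m.
Proof.
apply/mnmP => i; rewrite mnmE /=.
case: i => [[|[|k]] Hk] //=.
- by congr (m _); apply: val_inj.
- by congr (m _); apply: val_inj.
Qed.

Lemma pr_inj : injective pr.
Proof. by apply: (can_inj (g := fun p => mk p.1 p.2)) => m; exact: mk_pr. Qed.

Lemma mdeg2 m : mdeg m = (m i0 + m i1)%N.
Proof. rewrite mdegE big_ord_recr big_ord1 /=; congr (m _ + m _)%N; exact: val_inj. Qed.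

Lemma monosE d : monos d =
  [seq ((k - j)%N, j) | k <- iota 0 d.+1, j <- iota 0 k.+1].
Proof. by []. Qed.

Lemma monos_mem d a b : ((a, b) \in monos d) = (a + b <= d)%N.
Proof.
rewrite monosE; apply/idP/idP.
- case/allpairsPdep => k [j [Hk Hj [-> ->]]].
  rewrite mem_iota in Hk; rewrite mem_iota in Hj.
  rewrite subnK; [lia | lia].
- move=> H; apply/allpairsPdep; exists (a + b)%N, b.
  split; first by rewrite mem_iota; lia.
  + by rewrite mem_iota; lia.
  + congr pair; lia.
Qed.

Lemma monos_uniq d : uniq (monos d).
Proof.
rewrite monosE; apply: allpairs_uniq_dep; first exact: iota_uniq.
  by move=> k _; exact: iota_uniq.
move=> [k1 j1] [k2 j2] /allpairsPdep [a [b [_ Hb E1]]]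
  /allpairsPdep [a' [b' [_ Hb' E2]]] /= [E E'].
have [ea eb] : k1 = a /\ j1 = b by split; [exact: (f_equal (@projT1 _ _) E1) | exact: (f_equal (fun p : {_ : nat & nat} => (projT2 p : nat)) E1)].
have [ea' eb'] : k2 = a' /\ j2 = b' by split; [exact: (f_equal (@projT1 _ _) E2) | exact: (f_equal (fun p : {_ : nat & nat} => (projT2 p : nat)) E2)].
subst; rewrite mem_iota in Hb; rewrite mem_iota in Hb'.
have ek : a = a' by lia.
by subst.
Qed.

Lemma monos_size d : size (monos d) = pdim d.
Proof.
rewrite /monos size_flatten /shape -map_comp.
rewrite (eq_map (g := fun k => k.+1)); last by move=> k /=; rewrite size_map size_iota.
rewrite /pdim; elim: d => [|d IH] //.
rewrite -addn1 iotaD map_cat sumn_cat IH /=.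
by rewrite add0n addn0 addn1 [in RHS]binS bin1.
Qed.

Lemma sum_sub (V : nmodType) (T : eqType) (s t : seq T) (G : T -> V) :
  uniq s -> uniq t -> {subset s <= t} ->
  (forall z, z \in t -> z \notin s -> G z = 0) ->
  \sum_(z <- t) G z = \sum_(z <- s) G z.
Proof.
move=> us ut sst G0.
rewrite (bigID (mem s)) /= [X in _ + X]big1_seq ?addr0; last first.
  by move=> z /andP [] Hs Ht; apply: G0.
rewrite -big_filter; apply: perm_big; apply: uniq_perm.
- exact: filter_uniq.
- exact: us.
- by move=> z; rewrite mem_filter; case Hz: (z \in s) => //=; rewrite sst.
Qed.

Section Main.
Variable R : realFieldType.
Variable f : {mpoly int[2]}.
Variable d : nat.
Hypothesis hsz : (msize f <= d.+1)%N.

Definition G (x y : R) (ab : nat * nat) : R :=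
  (f@_(mk ab.1 ab.2))%:~R * (x ^+ ab.1 * y ^+ ab.2).

Lemma evalZ_sum x y : evalZ f x y = \sum_(ab <- monos d) G x y ab.
Proof.
rewrite /evalZ /mmap.
transitivity (\sum_(m <- msupp f) G x y (pr m)).
  apply: eq_bigr => m _; rewrite /G mk_pr /mmap1 big_ord_recr big_ord1 /=.
  by have -> : widen_ord (leqnSn 1) ord0 = i0 by apply: val_inj.
rewrite -(big_map pr predT) /=.
symmetry; apply: sum_sub.
- rewrite map_inj_uniq; [exact: msupp_uniq | exact: pr_inj].
- exact: monos_uniq.
- move=> z /mapP [m Hm ->]; rewrite /pr monos_mem -mdeg2.
  have := msize_mdeg_lt Hm; lia.
- move=> [a b] _ Hn; rewrite /G /=.
  have : mk a b \notin msupp f.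
    apply: contra Hn => Hm; apply/mapP; exists (mk a b) => //.
    by rewrite pr_mk.
  by rewrite mcoeff_msupp negbK => /eqP ->; rewrite mul0r.
Qed.

Definition cvec : 'rV[R]_(pdim d) :=
  \row_(i < pdim d) (f@_(mk (nth (0%N, 0%N) (monos d) i).1
                            (nth (0%N, 0%N) (monos d) i).2))%:~R.

Lemma cvec_vd x y : evalZ f x y = 0 -> cvec *m vd d x y = 0.
Proof.
move=> H0; apply/matrixP => i j; rewrite !ord1 !mxE.
transitivity (evalZ f x y); last exact: H0.
rewrite evalZ_sum (big_nth (0%N, 0%N)) monos_size big_mkord.
by apply: eq_bigr => k _; rewrite !mxE.
Qed.

Lemma cvec_neq0 : f != 0 -> cvec != 0.
Proof.
move=> fn0.
have : msupp f != [::] by rewrite msupp_eq0.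
case Es: (msupp f) => [|m s] // _.
have Hm : m \in msupp f by rewrite Es mem_head.
have Hin : pr m \in monos d.
  rewrite /pr monos_mem -mdeg2; have := msize_mdeg_lt Hm; lia.
have Hk : (index (pr m) (monos d) < pdim d)%N by rewrite -monos_size index_mem.
apply/negP => /eqP /matrixP /(_ 0 (Ordinal Hk)); rewrite !mxE /=.
rewrite nth_index // mk_pr => /eqP; rewrite intr_eq0.
by move=> /eqP H; move: Hm; rewrite mcoeff_msupp H eqxx.
Qed.

End Main.

Theorem corollary3 (R : realFieldType) (N d : nat) (hd : (0 < d)%N)
  (alo ahi blo bhi : 'I_N -> R) :
  (forall xs ys : 'I_N -> R,
     (forall i, in_rect (alo i) (ahi i) (blo i) (bhi i) (xs i) (ys i)) ->
     0 < D_d d xs ys) ->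
  forall f : {mpoly int[2]}, f != 0 -> inV alo ahi blo bhi f ->
    (d.+1 <= tdeg f)%N.
Proof.
move=> HD f fn0 HV.
rewrite leqNgt; apply/negP => Hlt.
have hsz : (msize f <= d.+1)%N by move: Hlt; rewrite /tdeg; lia.
have HV' : forall i, exists p : R * R,
    in_rect (alo i) (ahi i) (blo i) (bhi i) p.1 p.2 /\ evalZ f p.1 p.2 = 0.
  by move=> i; have [x [y H]] := HV i; exists (x, y).
pose P i := proj1_sig (constructive_indefinite_description _ (HV' i)).
have HP i : in_rect (alo i) (ahi i) (blo i) (bhi i) (P i).1 (P i).2 /\
            evalZ f (P i).1 (P i).2 = 0.
  exact: (proj2_sig (constructive_indefinite_description _ (HV' i))).
have := HD (fun i => (P i).1) (fun i => (P i).2) (fun i => (HP i).1).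
have -> : D_d d (fun i => (P i).1) (fun i => (P i).2) = 0.
  apply/eqP/det0P; exists (cvec R f d); first exact: (@cvec_neq0 R f d hsz fn0).
  rewrite /Dmat mulmx_sumr big1 // => i _.
  by rewrite mulmxA (@cvec_vd R f d hsz _ _ (HP i).2) mul0mx.
by rewrite ltxx.
Qed.
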